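(* Let $K$ be a field and let $f\colon\mathbb Z^k\to K$ be a hypergeometric term on $\mathbb Z^k$ that is not a zero divisor. Then for each $\vec v\in\mathbb Z^k$ there is a unique term ratio of $f$ in the direction $\vec v$.
   Context: For $f\colon\mathbb Z^k\to K$ and $\vec v\in\mathbb Z^k$ write $f^{\vec v}(\vec z)=f(\vec z+\vec v)$. A hypergeometric term on $\mathbb Z^k$ over $K$ is a function $f\colon\mathbb Z^k\to K$ such that for each $i\in\{1,\dots,k\}$ there are nonzero polynomials $A_i,B_i\in K[\vec z]$ with $A_i(\vec z)f(\vec z)=B_i(\vec z)f(\vec z+\vec e_i)$ for all $\vec z\in\mathbb Z^k$. $f$ is a zero divisor if there is a nonzero polynomial $p$ with $p(\vec z)f(\vec z)=0$ for all $\vec z$. A term ratio of $f$ in the direction $\vec v$ is a rational function $R_{\vec v}=A_{\vec v}/B_{\vec v}\in K(\vec z)$ where $A_{\vec v},B_{\vec v}\in K[\vec z]$ are nonzero polynomials with $A_{\vec v}f=B_{\vec v}f^{\vec v}$ pointwise on $\mathbb Z^k$. *)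

(* Defs.v *)
From HB Require Import structures.
From mathcomp Require Import all_boot all_order all_algebra.
From mathcomp Require Import fraction.
From mathcomp.multinomials Require Import mpoly.
Set Implicit Arguments. Unset Strict Implicit. Unset Printing Implicit Defensive.
Import GRing.Theory.
Local Open Scope ring_scope.

Definition shiftZ (k : nat) (v z : 'I_k -> int) : 'I_k -> int :=
  fun i => z i + v i.

Definition unitZ (k : nat) (i : 'I_k) : 'I_k -> int :=
  fun j => ((j == i) : nat)%:Z.

Definition evalZ (K : fieldType) (k : nat) (p : {mpoly K[k]}) (z : 'I_k -> int) : K :=
  p.@[fun i => (z i)%:~R].

Definition hypergeometric (K : fieldType) (k : nat) (f : ('I_k -> int) -> K) : Prop :=
  forall i : 'I_k, exists (A B : {mpoly K[k]}),
    [/\ A != 0, B != 0 &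
        forall z, evalZ A z * f z = evalZ B z * f (shiftZ (unitZ i) z)].

Definition zero_divisor (K : fieldType) (k : nat) (f : ('I_k -> int) -> K) : Prop :=
  exists p : {mpoly K[k]}, p != 0 /\ forall z, evalZ p z * f z = 0.

Definition term_ratio (K : fieldType) (k : nat) (f : ('I_k -> int) -> K)
  (v : 'I_k -> int) (R : {fraction {mpoly K[k]}}) : Prop :=
  exists (A B : {mpoly K[k]}),
    [/\ A != 0, B != 0, R = tofrac A / tofrac B &
        forall z, evalZ A z * f z = evalZ B z * f (shiftZ v z)].

(* Main.v *)
Require Import Defs.
From HB Require Import structures.
From mathcomp Require Import all_boot all_order all_algebra.
From mathcomp Require Import fraction.
From mathcomp.multinomials Require Import mpoly.
From Stdlib Require Import FunctionalExtensionality.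
From mathcomp Require Import ring.
Set Implicit Arguments. Unset Strict Implicit.
Import GRing.Theory.
Local Open Scope ring_scope.

Section S.
Variables (K : fieldType) (k : nat) (f : ('I_k -> int) -> K).

Definition shiftP (p : {mpoly K[k]}) (v : 'I_k -> int) : {mpoly K[k]} :=
  p \mPo [tuple ('X_i + ((v i)%:~R)%:MP) | i < k].

Lemma evalZ_shift (p : {mpoly K[k]}) v z : evalZ (shiftP p v) z = evalZ p (shiftZ v z).
Proof.
rewrite /evalZ /shiftP comp_mpoly_meval; apply: meval_eq => i.
by rewrite tnth_mktuple mevalD mevalXU mevalC /shiftZ rmorphD.
Qed.

Lemma evalZM (p q : {mpoly K[k]}) z : evalZ (p * q) z = evalZ p z * evalZ q z.
Proof. exact: mevalM. Qed.

Lemma shiftZK (v z : 'I_k -> int) : shiftZ v (shiftZ (fun i => - v i) z) = z.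
Proof. apply: functional_extensionality => i; rewrite /shiftZ; by rewrite addrNK. Qed.

Lemma shiftP_neq0 (p : {mpoly K[k]}) v : ~ zero_divisor f -> p != 0 -> shiftP p v != 0.
Proof.
move=> nzd p0; apply/eqP => h; apply: nzd; exists p; split => // w.
have := evalZ_shift p v (shiftZ (fun i => - v i) w).
by rewrite h shiftZK /evalZ meval0 => <-; rewrite mul0r.
Qed.

Definition TR (v : 'I_k -> int) := exists A B : {mpoly K[k]},
  [/\ A != 0, B != 0 & forall z, evalZ A z * f z = evalZ B z * f (shiftZ v z)].

Lemma TR_ext v w : (forall i, v i = w i) -> TR v -> TR w.
Proof. by move=> h; have -> : v = w by apply: functional_extensionality. Qed.

Lemma TR0 : TR (fun _ => 0).
Proof.
exists 1, 1; split; rewrite ?oner_eq0 // => z.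
have -> : shiftZ (fun _ => 0) z = z.
  by apply: functional_extensionality => i; rewrite /shiftZ addr0.
by [].
Qed.

Lemma TR_add v1 v2 : ~ zero_divisor f -> TR v1 -> TR v2 -> TR (fun i => v1 i + v2 i).
Proof.
move=> nzd [A1 [B1 [a1 b1 h1]]] [A2 [B2 [a2 b2 h2]]].
exists (A1 * shiftP A2 v1), (B1 * shiftP B2 v1); split.
- by rewrite mulf_neq0 // shiftP_neq0.
- by rewrite mulf_neq0 // shiftP_neq0.
move=> z; rewrite !evalZM !evalZ_shift.
rewrite mulrAC h1 -[LHS]mulrA [X in _ * X = _]mulrC h2 mulrA.
have -> : shiftZ v2 (shiftZ v1 z) = shiftZ (fun i => v1 i + v2 i) z.
  by apply: functional_extensionality => i; rewrite /shiftZ addrA.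
by [].
Qed.

Lemma TR_neg v : ~ zero_divisor f -> TR v -> TR (fun i => - v i).
Proof.
move=> nzd [A [B [a b h]]].
exists (shiftP B (fun i => - v i)), (shiftP A (fun i => - v i)); split.
- exact: shiftP_neq0.
- exact: shiftP_neq0.
move=> z; rewrite !evalZ_shift.
have := h (shiftZ (fun i => - v i) z); rewrite shiftZK => ->.
by [].
Qed.

Lemma TR_mult (i : 'I_k) (m : int) : ~ zero_divisor f -> hypergeometric f ->
  TR (fun j => if j == i then m else 0).
Proof.
move=> nzd hg.
have e : TR (fun j => if j == i then 1 else 0).
  have [A [B [a b h]]] := hg i; exists A, B; split => // z; rewrite h.
  have -> : shiftZ (unitZ i) z = shiftZ (fun j => if j == i then 1 else 0) z.
    by apply: functional_extensionality => j; rewrite /shiftZ /unitZ; case: (j == i).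
  by [].
have hn : forall n : nat, TR (fun j => if j == i then n%:Z else 0).
  elim=> [|n IH].
    by apply: (TR_ext _ TR0) => j; case: (j == i).
  apply: (TR_ext _ (TR_add nzd IH e)) => j; case: (j == i); [by rewrite -addn1 PoszD | by rewrite addr0].
case: m => [n|n]; first exact: hn.
apply: (TR_ext _ (TR_neg nzd (hn n.+1))) => j; case: (j == i); [by rewrite NegzE | by rewrite oppr0].
Qed.

End S.

Theorem lemmaB6 (K : fieldType) (k : nat) (f : ('I_k -> int) -> K) :
  hypergeometric f -> ~ zero_divisor f ->
  forall v : 'I_k -> int,
    exists! R : {fraction {mpoly K[k]}}, term_ratio f v R.
Proof.
move=> hg nzd v.
have ex : TR f v.
  have hs : forall s : seq 'I_k,
      TR f (fun j => \sum_(i <- s) (if j == i then v i else 0)).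
    elim=> [|x s IH].
      by apply: (TR_ext _ (TR0 f)) => j; rewrite big_nil.
    apply: (TR_ext _ (TR_add nzd (TR_mult x (v x) nzd hg) IH)) => j.
    by rewrite big_cons.
  apply: (TR_ext _ (hs (index_enum 'I_k))) => j.
  rewrite -big_mkcond /=.
  rewrite (eq_bigl (fun i => i == j)); last by move=> i; rewrite eq_sym.
  by rewrite big_pred1_eq.
case: ex => [A [B [a b h]]].
exists (tofrac A / tofrac B); split; first by exists A, B; split.
move=> R' [A' [B' [a' b' -> h']]].
apply/eqP; rewrite eqr_div ?tofrac_eq0 // -!tofracM tofrac_eq.
apply/eqP; apply/eqP; rewrite -subr_eq0; apply/negPn/negP => hne.
apply: nzd; exists (A * B' - A' * B); split => // z.
rewrite /evalZ mevalB !mevalM -/(evalZ A z) -/(evalZ B z) -/(evalZ A' z) -/(evalZ B' z).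
have -> : (evalZ A z * evalZ B' z - evalZ A' z * evalZ B z) * f z =
  evalZ B' z * (evalZ A z * f z) - evalZ B z * (evalZ A' z * f z) by ring.
by rewrite h h'; ring.
Qed.
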